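(* For all complex $y$, $$\sum_{n=0}^{\infty}\binom{2n}{n}\frac{1}{2^n}R_n(y)=e^{y}\sum_{n=0}^{\infty}\frac{y^{2n+1}}{4^n(n!)^2(2n+1)}=e^{y}\left(yI_0(y)+\frac{\pi y}{2}\big[I_0(y)\mathbf{L}_1(y)-I_1(y)\mathbf{L}_0(y)\big]\right).$$
   Context: For an integer $n\ge 0$ and complex $y$, $R_n(y)=e^y-1-\frac{y}{1!}-\frac{y^2}{2!}-\dots-\frac{y^n}{n!}=e^y-\sum_{k=0}^n\frac{y^k}{k!}$. $I_0(z)=\sum_{n\ge0}\frac{z^{2n}}{4^n(n!)^2}$ and $I_1=I_0'$ are the modified Bessel functions of the first kind; $\mathbf{L}_0,\mathbf{L}_1$ are the modified Struve functions of orders $0$ and $1$. *)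

(* Defs.v *)
From Stdlib Require Import Reals Factorial.
From Coquelicot Require Import Coquelicot.
Open Scope R_scope.

(* Sum of a complex series, via real and imaginary parts (meaningful when
   the series converges). *)
Definition csum (a : nat -> C) : C :=
  (Series (fun n => Re (a n)), Series (fun n => Im (a n))).

Definition cpow (y : C) (n : nat) : C := pow_n y n.

Definition cexp (y : C) : C :=
  csum (fun n => Cdiv (cpow y n) (RtoC (INR (Factorial.fact n)))).

Definition Rrem (n : nat) (y : C) : C :=
  Cminus (cexp y) (sum_n (fun k => Cdiv (cpow y k) (RtoC (INR (Factorial.fact k)))) n).

Definition I0 (z : C) : C :=
  csum (fun n => Cdiv (cpow z (2 * n)) (RtoC (4 ^ n * (INR (Factorial.fact n)) ^ 2))).

Definition I1 (z : C) : C :=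
  csum (fun n => Cdiv (cpow z (2 * n + 1))
                      (RtoC (2 ^ (2 * n + 1) * INR (Factorial.fact n) * INR (Factorial.fact (n + 1))))).

(* Gamma(k + 1/2) = (2k)! sqrt(pi) / (4^k k!) *)
Definition gamma_half (k : nat) : R :=
  INR (Factorial.fact (2 * k)) * sqrt PI / (4 ^ k * INR (Factorial.fact k)).

(* Modified Struve functions:
   L_nu(z) = sum_k (z/2)^(2k+nu+1) / (Gamma(k+3/2) Gamma(k+nu+3/2)) *)
Definition L0 (z : C) : C :=
  csum (fun k => Cdiv (cpow z (2 * k + 1))
                      (RtoC (2 ^ (2 * k + 1) * gamma_half (k + 1) * gamma_half (k + 1)))).

Definition L1 (z : C) : C :=
  csum (fun k => Cdiv (cpow z (2 * k + 2))
                      (RtoC (2 ^ (2 * k + 2) * gamma_half (k + 1) * gamma_half (k + 2)))).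

(* Main.v *)
Require Import Defs.
From Stdlib Require Import Reals Factorial Lia Lra Arith.
From Coquelicot Require Import Coquelicot.
Open Scope R_scope.

Lemma sum_n_fst (a : nat -> C) n : fst (sum_n a n) = sum_n (fun k => fst (a k)) n.
Proof.
  induction n as [|n IH]; [rewrite !sum_O; reflexivity|].
  rewrite !sum_Sn. simpl. rewrite <- IH. reflexivity.
Qed.
Lemma sum_n_snd (a : nat -> C) n : snd (sum_n a n) = sum_n (fun k => snd (a k)) n.
Proof.
  induction n as [|n IH]; [rewrite !sum_O; reflexivity|].
  rewrite !sum_Sn. simpl. rewrite <- IH. reflexivity.
Qed.

Lemma lim_C (u : nat -> C) (l : C) :
  filterlim u eventually (locally l) <->
  is_lim_seq (fun n => fst (u n)) (fst l) /\ is_lim_seq (fun n => snd (u n)) (snd l).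
Proof.
  rewrite filterlim_locally. split.
  - intros H. split; apply is_lim_seq_spec; intros eps;
      destruct (H eps) as [N HN]; exists N; intros n Hn; destruct (HN n Hn) as [H1 H2];
      [exact H1 | exact H2].
  - intros [H1 H2] eps. apply is_lim_seq_spec in H1. apply is_lim_seq_spec in H2.
    destruct (H1 eps) as [N1 HN1]. destruct (H2 eps) as [N2 HN2].
    exists (max N1 N2). intros n Hn. split.
    + apply HN1; lia.
    + apply HN2; lia.
Qed.

Lemma is_series_C (a : nat -> C) (l : C) :
  is_series a l <-> is_series (fun n => fst (a n)) (fst l) /\ is_series (fun n => snd (a n)) (snd l).
Proof.
  assert (E : forall (b : nat -> R) m, is_series b m <-> is_lim_seq (sum_n b) m).
  { intros b m. split; intros H; exact H. }
  rewrite !E. unfold is_series. rewrite lim_C.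
  split; intros [H1 H2]; split.
  all: eapply is_lim_seq_ext; [|eassumption]; intros n; simpl.
  all: first [ rewrite sum_n_fst | rewrite sum_n_snd | rewrite <- sum_n_fst | rewrite <- sum_n_snd ]; reflexivity.
Qed.

Lemma csum_is (a : nat -> C) (l : C) : is_series a l -> csum a = l.
Proof.
  intros H. apply is_series_C in H. destruct H as [H1 H2].
  unfold csum. destruct l as [l1 l2]. unfold Re, Im. simpl in *.
  rewrite (is_series_unique _ _ H1), (is_series_unique _ _ H2). reflexivity.
Qed.

Lemma im_le_Cmod (c : C) : Rabs (snd c) <= Cmod c.
Proof.
  destruct c as [x y]. unfold Cmod. simpl.
  rewrite <- sqrt_Rsqr_abs. apply sqrt_le_1_alt. unfold Rsqr.
  pose proof (pow2_ge_0 x). nra.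
Qed.
Lemma fst_le_Cmod (c : C) : Rabs (fst c) <= Cmod c.
Proof. exact (re_le_Cmod c). Qed.

Lemma abs_fst (a : nat -> C) : ex_series (fun n => Cmod (a n)) -> ex_series (fun n => Rabs (fst (a n))).
Proof.
  intros H. apply (@ex_series_le R_AbsRing R_CompleteNormedModule _ (fun n => Cmod (a n))); [|exact H].
  intros n. change (norm (Rabs (fst (a n)))) with (Rabs (Rabs (fst (a n)))).
  rewrite Rabs_Rabsolu. apply fst_le_Cmod.
Qed.
Lemma abs_snd (a : nat -> C) : ex_series (fun n => Cmod (a n)) -> ex_series (fun n => Rabs (snd (a n))).
Proof.
  intros H. apply (@ex_series_le R_AbsRing R_CompleteNormedModule _ (fun n => Cmod (a n))); [|exact H].
  intros n. change (norm (Rabs (snd (a n)))) with (Rabs (Rabs (snd (a n)))).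
  rewrite Rabs_Rabsolu. apply im_le_Cmod.
Qed.

Lemma cauchy_C (a b : nat -> C) (la lb : C) :
  is_series a la -> is_series b lb ->
  ex_series (fun n => Cmod (a n)) -> ex_series (fun n => Cmod (b n)) ->
  is_series (fun n => sum_n (fun k => Cmult (a k) (b (n - k)%nat)) n) (Cmult la lb).
Proof.
  intros Ha Hb Aa Ab.
  apply is_series_C in Ha. destruct Ha as [Ha1 Ha2].
  apply is_series_C in Hb. destruct Hb as [Hb1 Hb2].
  pose proof (abs_fst _ Aa) as Aa1. pose proof (abs_snd _ Aa) as Aa2.
  pose proof (abs_fst _ Ab) as Ab1. pose proof (abs_snd _ Ab) as Ab2.
  apply is_series_C. split.
  - pose proof (is_series_mult _ _ _ _ Ha1 Hb1 Aa1 Ab1) as P1.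
    pose proof (is_series_mult _ _ _ _ Ha2 Hb2 Aa2 Ab2) as P2.
    pose proof (is_series_minus _ _ _ _ P1 P2) as P.
    eapply is_series_ext; [|exact P]. intros n. cbv beta.
    rewrite sum_n_fst, sum_n_Reals. change (plus ?x (opp ?y)) with (x - y).
    rewrite <- minus_sum. apply sum_eq. intros; simpl; reflexivity.
  - pose proof (is_series_mult _ _ _ _ Ha1 Hb2 Aa1 Ab2) as P1.
    pose proof (is_series_mult _ _ _ _ Ha2 Hb1 Aa2 Ab1) as P2.
    pose proof (is_series_plus _ _ _ _ P1 P2) as P.
    eapply is_series_ext; [|exact P]. intros n. cbv beta.
    rewrite sum_n_snd, sum_n_Reals. change (plus ?x ?y) with (x + y).
    rewrite <- plus_sum. apply sum_eq. intros; simpl; reflexivity.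
Qed.
Lemma INR_fact_S n : INR (fact (S n)) = (INR n + 1) * INR (fact n).
Proof. change (fact (S n)) with (S n * fact n)%nat. rewrite mult_INR, S_INR. reflexivity. Qed.

Lemma fact_pos n : 0 < INR (fact n).
Proof. apply lt_0_INR. apply lt_O_fact. Qed.

Lemma pow2odd n : 2 ^ (2 * n + 1) = 2 * 4 ^ n.
Proof. rewrite pow_add, pow_mult. replace (2^2) with 4 by ring. ring. Qed.
Lemma pow2even n : 2 ^ (2 * n + 2) = 4 * 4 ^ n.
Proof. rewrite pow_add, pow_mult. replace (2^2) with 4 by ring. ring. Qed.

Lemma gh1 k : gamma_half (k+1) =
  INR (fact (2*k)) * (2*INR k+1) * (2*INR k+2) * sqrt PI / (4 * 4^k * (INR k+1) * INR (fact k)).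
Proof.
  unfold gamma_half.
  replace (2 * (k+1))%nat with (S (S (2*k))) by lia.
  replace (k+1)%nat with (S k) by lia.
  rewrite !INR_fact_S. rewrite !S_INR, mult_INR. simpl (INR 2). simpl pow.
  pose proof (fact_pos k). pose proof (fact_pos (2*k)). pose proof (pos_INR k).
  pose proof (pow_lt 4 k ltac:(lra)).
  field. lra.
Qed.

Lemma gh2 k : gamma_half (k+2) =
  INR (fact (2*k)) * (2*INR k+1) * (2*INR k+2) * (2*INR k+3) * (2*INR k+4) * sqrt PI
   / (16 * 4^k * (INR k+1) * (INR k+2) * INR (fact k)).
Proof.
  unfold gamma_half.
  replace (2 * (k+2))%nat with (S (S (S (S (2*k))))) by lia.
  replace (k+2)%nat with (S (S k)) by lia.
  rewrite !INR_fact_S. rewrite !S_INR, mult_INR. simpl (INR 2). simpl pow.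
  pose proof (fact_pos k). pose proof (fact_pos (2*k)). pose proof (pos_INR k).
  pose proof (pow_lt 4 k ltac:(lra)).
  field. lra.
Qed.

Definition a0 n := / (4 ^ n * INR (fact n) ^ 2).
Definition a1 n := / (2 ^ (2 * n + 1) * INR (fact n) * INR (fact (n + 1))).
Definition c0 k := / (2 ^ (2 * k + 1) * gamma_half (k + 1) * gamma_half (k + 1)).
Definition c1 k := / (2 ^ (2 * k + 2) * gamma_half (k + 1) * gamma_half (k + 2)).
Definition q2 k := 4 ^ k * INR (fact k) ^ 2 * (INR k + 1) /
   (INR (fact (2 * k)) ^ 2 * (2 * INR k + 1) * (2 * INR k + 2)).

Lemma PI_sq : PI = sqrt PI * sqrt PI.
Proof. rewrite sqrt_sqrt; [reflexivity|]. pose proof PI_RGT_0; lra. Qed.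

Lemma tele i : forall k,
  PI / 2 * sum_f_R0 (fun n => a0 n * c1 (i + k - n) - a1 n * c0 (i + k - n)) i
  = - 2 / (2 * (INR i + INR k) + 3) * (a1 i * q2 k).
Proof.
  induction i as [|i IH]; intros k.
  - change (sum_f_R0 ?f 0) with (f 0%nat). cbv beta. replace (0 + k - 0)%nat with k by lia.
    unfold a0, a1, c0, c1, q2. rewrite gh1, gh2, !pow2odd, !pow2even.
    replace (2 * 0 + 1)%nat with 1%nat by lia. replace (0+1)%nat with 1%nat by lia.
    change (INR 0) with 0. change (fact 0) with 1%nat. change (fact 1) with 1%nat. change (INR 1) with 1.
    rewrite !pow_O.
    pose proof (fact_pos k). pose proof (fact_pos (2*k)). pose proof (pos_INR k).
    pose proof (pow_lt 4 k ltac:(lra)). pose proof (sqrt_lt_R0 PI PI_RGT_0).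
    pose proof PI_sq as HP. set (s := sqrt PI) in *. clearbody s. rewrite HP. field. lra.
  - rewrite tech5. rewrite Rmult_plus_distr_l.
    rewrite (sum_eq _ (fun n => a0 n * c1 (i + S k - n) - a1 n * c0 (i + S k - n))).
    2:{ intros n Hn. replace (S i + k - n)%nat with (i + S k - n)%nat by lia. reflexivity. }
    rewrite IH. replace (S i + k - S i)%nat with k by lia.
    unfold a0, a1, c0, c1, q2. rewrite !gh1, !gh2, !pow2odd, !pow2even.
    replace (2 * S k)%nat with (S (S (2*k))) by lia.
    replace (i + 1)%nat with (S i) by lia. replace (S i + 1)%nat with (S (S i)) by lia.
    rewrite !INR_fact_S, !S_INR, !mult_INR. simpl (INR 2). rewrite <- !tech_pow_Rmult.
    pose proof (fact_pos k). pose proof (fact_pos (2*k)). pose proof (pos_INR k).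
    pose proof (fact_pos i). pose proof (pos_INR i). pose proof (pow_lt 4 i ltac:(lra)).
    pose proof (pow_lt 4 k ltac:(lra)). pose proof (sqrt_lt_R0 PI PI_RGT_0).
    pose proof PI_sq as HP. set (s := sqrt PI) in *. clearbody s. rewrite HP. field. repeat split; lra.
Qed.

Lemma coef_id m : sum_f_R0 (fun n => a0 n * c1 (m - n) - a1 n * c0 (m - n)) m
  = 2 / PI * (a0 (m+1) * (1 / (2 * INR m + 3) - 1)).
Proof.
  pose proof (tele m 0) as H. rewrite Nat.add_0_r in H.
  pose proof PI_RGT_0.
  assert (E : sum_f_R0 (fun n => a0 n * c1 (m - n) - a1 n * c0 (m - n)) m =
     2 / PI * (-2 / (2 * (INR m + INR 0) + 3) * (a1 m * q2 0))).
  { rewrite <- H. field. lra. }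
  rewrite E. unfold a1, q2, a0. rewrite pow2odd. replace (m+1)%nat with (S m) by lia.
  rewrite INR_fact_S. change (INR 0) with 0. change (fact 0) with 1%nat. change (INR 1) with 1.
  replace (2 * 0)%nat with 0%nat by lia. change (fact 0) with 1%nat. change (INR 1) with 1.
  rewrite <- tech_pow_Rmult.
  pose proof (fact_pos m). pose proof (pos_INR m). pose proof (pow_lt 4 m ltac:(lra)).
  replace (4 ^ S m) with (4 * 4^m) by (simpl; ring). field. repeat split; lra.
Qed.

Lemma cdiv_eq (z : C) (r : R) : r <> 0 -> Cdiv z (RtoC r) = Cmult (RtoC (/ r)) z.
Proof. intros H. rewrite RtoC_inv by exact H. unfold Cdiv. ring. Qed.

Lemma Cmod_cpow (y : C) m : Cmod (cpow y m) = Cmod y ^ m.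
Proof.
  unfold cpow. induction m as [|m IH]; simpl.
  - apply Cmod_1.
  - change (mult y (pow_n y m)) with (Cmult y (pow_n y m)). rewrite Cmod_mult, IH. reflexivity.
Qed.

Lemma Cmod_term (c : R) (y : C) m : Cmod (Cmult (RtoC c) (cpow y m)) = Rabs c * Cmod y ^ m.
Proof. rewrite Cmod_mult, Cmod_R, Cmod_cpow. reflexivity. Qed.

Lemma cpow_add (y : C) a b : cpow y (a + b) = Cmult (cpow y a) (cpow y b).
Proof. unfold cpow. rewrite pow_n_plus. reflexivity. Qed.

Lemma sum_n_RtoC (r : nat -> R) (z : C) m :
  sum_n (fun n => Cmult (RtoC (r n)) z) m = Cmult (RtoC (sum_f_R0 r m)) z.
Proof.
  induction m as [|m IH].
  - rewrite sum_O. reflexivity.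
  - rewrite sum_Sn, IH. simpl sum_f_R0. change (plus ?x ?w) with (Cplus x w).
    rewrite RtoC_plus. match goal with |- ?a = ?b => change (@eq C a b) end. ring.
Qed.

Lemma is_series_csum (a : nat -> C) : ex_series a -> is_series a (csum a).
Proof. intros [l Hl]. rewrite (csum_is _ _ Hl). exact Hl. Qed.

Lemma exp_ex (t : R) : ex_series (fun n => t ^ n / INR (fact n)).
Proof.
  exists (exp t). pose proof (is_exp_Reals t) as H. unfold is_pseries in H.
  eapply is_series_ext; [|exact H]. intros n. simpl. rewrite pow_n_pow.
  change (scal ?x ?w) with (x * w). unfold Rdiv. ring.
Qed.

Lemma maj_ex (K t : R) : ex_series (fun n => K * (t ^ n / INR (fact n))).
Proof. apply (@ex_series_scal R_AbsRing R_NormedModule K). apply exp_ex. Qed.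

Lemma abs_conv (x : nat -> C) (g : nat -> R) :
  (forall n, Cmod (x n) <= g n) -> ex_series g ->
  ex_series (fun n => Cmod (x n)) /\ ex_series x.
Proof.
  intros Hle Hg. split.
  - apply (@ex_series_le R_AbsRing R_CompleteNormedModule _ g); [|exact Hg].
    intros n. change (norm (Cmod (x n))) with (Rabs (Cmod (x n))).
    rewrite Rabs_pos_eq by apply Cmod_ge_0. apply Hle.
  - apply (@ex_series_le C_AbsRing C_CompleteNormedModule _ g); [|exact Hg].
    intros n. apply Hle.
Qed.

Lemma fact_mul_le a b : (fact a * fact b <= fact (a + b))%nat.
Proof.
  induction b as [|b IH].
  - rewrite Nat.add_0_r. simpl. lia.
  - replace (a + S b)%nat with (S (a + b)) by lia.
    change (fact (S b)) with (S b * fact b)%nat. change (fact (S (a+b))) with (S (a+b) * fact (a+b))%nat.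
    nia.
Qed.

Lemma INR_fact_le a b : (a <= b)%nat -> INR (fact a) <= INR (fact b).
Proof. intros H. apply le_INR. apply fact_le. exact H. Qed.

Lemma INR_fact_mul_le a b : INR (fact a) * INR (fact b) <= INR (fact (a + b)).
Proof. rewrite <- mult_INR. apply le_INR. apply fact_mul_le. Qed.

Lemma gamma_half_pos k : 0 < gamma_half k.
Proof.
  unfold gamma_half. pose proof (fact_pos (2*k)). pose proof (fact_pos k).
  pose proof (sqrt_lt_R0 PI PI_RGT_0). pose proof (pow_lt 4 k ltac:(lra)).
  apply Rdiv_lt_0_compat; apply Rmult_lt_0_compat; lra.
Qed.

Lemma c0_closed k : c0 k = 8 / PI * 4 ^ k * INR (fact (k+1)) ^ 2 / INR (fact (2*k+2)) ^ 2.
Proof.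
  unfold c0, gamma_half. rewrite pow2odd.
  replace (2 * (k+1))%nat with (2*k+2)%nat by lia.
  pose proof (fact_pos (2*k+2)). pose proof (fact_pos (k+1)).
  pose proof (sqrt_lt_R0 PI PI_RGT_0). pose proof (pow_lt 4 k ltac:(lra)).
  pose proof PI_sq as HP. set (s := sqrt PI) in *. clearbody s. rewrite HP.
  replace (4 ^ (k+1)) with (4 * 4^k) by (rewrite pow_add; simpl; ring).
  field. repeat split; lra.
Qed.

Lemma c1_closed k : c1 k = 16 / PI * 4 ^ k * INR (fact (k+1)) * INR (fact (k+2))
   / (INR (fact (2*k+2)) * INR (fact (2*k+4))).
Proof.
  unfold c1, gamma_half. rewrite pow2even.
  replace (2 * (k+1))%nat with (2*k+2)%nat by lia.
  replace (2 * (k+2))%nat with (2*k+4)%nat by lia.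
  pose proof (fact_pos (2*k+2)). pose proof (fact_pos (k+1)).
  pose proof (fact_pos (2*k+4)). pose proof (fact_pos (k+2)).
  pose proof (sqrt_lt_R0 PI PI_RGT_0). pose proof (pow_lt 4 k ltac:(lra)).
  pose proof PI_sq as HP. set (s := sqrt PI) in *. clearbody s. rewrite HP.
  replace (4 ^ (k+1)) with (4 * 4^k) by (rewrite pow_add; simpl; ring).
  replace (4 ^ (k+2)) with (16 * 4^k) by (rewrite pow_add; simpl; ring).
  field. repeat split; lra.
Qed.

Lemma c0_bound k : 0 <= c0 k <= 8 / PI * 4 ^ k / INR (fact k).
Proof.
  rewrite c0_closed.
  pose proof (fact_pos (2*k+2)). pose proof (fact_pos (k+1)). pose proof (fact_pos k).
  pose proof PI_RGT_0. pose proof (pow_lt 4 k ltac:(lra)).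
  pose proof (INR_fact_mul_le (k+1) (k+1)) as F1.
  replace (k+1+(k+1))%nat with (2*k+2)%nat in F1 by lia.
  pose proof (INR_fact_le k (2*k+2) ltac:(lia)) as F2.
  set (A := INR (fact (2*k+2))) in *. set (B := INR (fact (k+1))) in *. set (Fk := INR (fact k)) in *.
  assert (HK : 0 < 8 / PI * 4 ^ k) by (apply Rmult_lt_0_compat; [apply Rdiv_lt_0_compat|]; lra).
  split.
  - apply Rdiv_le_0_compat; [|nra]. apply Rmult_le_pos; [lra|]. nra.
  - unfold Rdiv. rewrite Rmult_assoc. apply Rmult_le_compat_l; [lra|].
    apply (Rmult_le_reg_r (A ^ 2 * Fk)); [apply Rmult_lt_0_compat; [apply pow_lt|]; lra|].
    replace (B ^ 2 * / A ^ 2 * (A ^ 2 * Fk)) with (B^2 * Fk) by (field; lra).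
    replace (/ Fk * (A ^ 2 * Fk)) with (A^2) by (field; lra).
    simpl. nra.
Qed.

Lemma c1_bound k : 0 <= c1 k <= 16 / PI * 4 ^ k / INR (fact k).
Proof.
  rewrite c1_closed.
  pose proof (fact_pos (2*k+2)). pose proof (fact_pos (k+1)). pose proof (fact_pos k).
  pose proof (fact_pos (2*k+4)). pose proof (fact_pos (k+2)).
  pose proof PI_RGT_0. pose proof (pow_lt 4 k ltac:(lra)).
  pose proof (INR_fact_mul_le (k+1) (k+2)) as F1.
  pose proof (INR_fact_le (k+1+(k+2)) (2*k+4) ltac:(lia)) as F3.
  pose proof (INR_fact_le k (2*k+2) ltac:(lia)) as F2.
  set (A := INR (fact (2*k+2))) in *. set (A4 := INR (fact (2*k+4))) in *.
  set (B := INR (fact (k+1))) in *. set (B2 := INR (fact (k+2))) in *. set (Fk := INR (fact k)) in *.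
  set (M := INR (fact (k + 1 + (k + 2)))) in *.
  assert (HK : 0 < 16 / PI * 4 ^ k) by (apply Rmult_lt_0_compat; [apply Rdiv_lt_0_compat|]; lra).
  split.
  - apply Rdiv_le_0_compat; [|apply Rmult_lt_0_compat; lra]. apply Rmult_le_pos; [|lra]. apply Rmult_le_pos; lra.
  - assert (Hr : B * B2 / (A * A4) <= / Fk).
    { apply (Rmult_le_reg_r (A * A4 * Fk)); [apply Rmult_lt_0_compat; [apply Rmult_lt_0_compat|]; lra|].
      replace (B * B2 / (A * A4) * (A * A4 * Fk)) with (B * B2 * Fk) by (field; lra).
      replace (/ Fk * (A * A4 * Fk)) with (A * A4) by (field; lra).
      rewrite (Rmult_comm A A4). apply Rmult_le_compat; [apply Rmult_le_pos; lra|lra|lra|lra]. }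
    replace (16 / PI * 4 ^ k * B * B2 / (A * A4)) with (16 / PI * 4 ^ k * (B * B2 / (A * A4))) by (field; lra).
    unfold Rdiv at 3. apply Rmult_le_compat_l; lra.
Qed.

Lemma bound_gen (c : R) (y : C) n e K A : 0 <= c -> c <= K * A ^ n / INR (fact n) ->
  Cmod (Cmult (RtoC c) (cpow y (2 * n + e))) <= (K * Cmod y ^ e) * ((A * Cmod y ^ 2) ^ n / INR (fact n)).
Proof.
  intros H0 H1. rewrite Cmod_term, Rabs_pos_eq by exact H0.
  rewrite pow_add, pow_mult, Rpow_mult_distr.
  pose proof (Cmod_ge_0 y). pose proof (pow_le _ e H).
  pose proof (pow_le (Cmod y ^ 2) n (pow_le _ 2 H)).
  replace (K * Cmod y ^ e * (A ^ n * (Cmod y ^ 2) ^ n / INR (fact n)))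
    with ((K * A ^ n / INR (fact n)) * ((Cmod y ^ 2) ^ n * Cmod y ^ e))
    by (pose proof (fact_pos n); field; lra).
  apply Rmult_le_compat_r; [apply Rmult_le_pos|]; lra.
Qed.

Lemma a0_pos n : 0 < a0 n.
Proof. unfold a0. apply Rinv_0_lt_compat. pose proof (fact_pos n). pose proof (pow_lt 4 n ltac:(lra)). apply Rmult_lt_0_compat; [lra|apply pow_lt; lra]. Qed.

Lemma a0_bound n : 0 <= a0 n <= 1 * 1 ^ n / INR (fact n).
Proof.
  split; [left; apply a0_pos|]. unfold a0. rewrite pow1.
  pose proof (fact_pos n). pose proof (pow_lt 4 n ltac:(lra)).
  assert (1 <= 4 ^ n) by (apply pow_R1_Rle; lra).
  assert (1 <= INR (fact n)) by (apply (le_INR 1); apply lt_O_fact).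
  rewrite Rmult_1_l. unfold Rdiv. rewrite Rmult_1_l. apply Rinv_le_contravar; [lra|].
  simpl. nra.
Qed.

Lemma a1_bound n : 0 <= a1 n <= 1 * 1 ^ n / INR (fact n).
Proof.
  unfold a1. rewrite pow2odd, pow1.
  pose proof (fact_pos n). pose proof (fact_pos (n+1)). pose proof (pow_lt 4 n ltac:(lra)).
  assert (1 <= 4 ^ n) by (apply pow_R1_Rle; lra).
  assert (1 <= INR (fact (n+1))) by (apply (le_INR 1); apply lt_O_fact).
  split. { left. apply Rinv_0_lt_compat. apply Rmult_lt_0_compat; [|lra]. nra. }
  rewrite Rmult_1_l. unfold Rdiv. rewrite Rmult_1_l. apply Rinv_le_contravar; [lra|].
  assert (INR (fact n) <= 2 * 4 ^ n * INR (fact n)) by nra.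
  assert (0 <= 2 * 4 ^ n * INR (fact n)) by nra. nra.
Qed.

Lemma b_bound n : 0 <= a0 n / INR (2 * n + 1) <= 1 * 1 ^ n / INR (fact n).
Proof.
  pose proof (a0_bound n) as [H1 H2]. pose proof (a0_pos n).
  assert (1 <= INR (2*n+1)) by (apply (le_INR 1); lia).
  split. { apply Rdiv_le_0_compat; lra. }
  eapply Rle_trans; [|exact H2]. unfold Rdiv. 
  rewrite <- (Rmult_1_r (a0 n)) at 2. apply Rmult_le_compat_l; [lra|].
  rewrite <- Rinv_1. apply Rinv_le_contravar; lra.
Qed.

Lemma term_eq (y : C) m (r : R) : r <> 0 ->
  Cdiv (cpow y m) (RtoC r) = Cmult (RtoC (/ r)) (cpow y m).
Proof. intros H. apply cdiv_eq. exact H. Qed.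

Definition ti0 (y : C) n := Cdiv (cpow y (2 * n)) (RtoC (4 ^ n * (INR (fact n)) ^ 2)).
Definition ti1 (y : C) n := Cdiv (cpow y (2 * n + 1))
   (RtoC (2 ^ (2 * n + 1) * INR (fact n) * INR (fact (n + 1)))).
Definition tl0 (y : C) k := Cdiv (cpow y (2 * k + 1))
   (RtoC (2 ^ (2 * k + 1) * gamma_half (k + 1) * gamma_half (k + 1))).
Definition tl1 (y : C) k := Cdiv (cpow y (2 * k + 2))
   (RtoC (2 ^ (2 * k + 2) * gamma_half (k + 1) * gamma_half (k + 2))).
Definition tb (y : C) n := Cdiv (cpow y (2 * n + 1))
   (RtoC (4 ^ n * (INR (fact n)) ^ 2 * INR (2 * n + 1))).

Lemma ti0_eq y n : ti0 y n = Cmult (RtoC (a0 n)) (cpow y (2 * n + 0)).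
Proof.
  unfold ti0, a0. rewrite Nat.add_0_r. apply cdiv_eq.
  pose proof (fact_pos n). pose proof (pow_lt 4 n ltac:(lra)).
  apply Rgt_not_eq. apply Rmult_lt_0_compat; [lra|apply pow_lt; lra].
Qed.
Lemma ti1_eq y n : ti1 y n = Cmult (RtoC (a1 n)) (cpow y (2 * n + 1)).
Proof.
  unfold ti1, a1. apply cdiv_eq.
  pose proof (fact_pos n). pose proof (fact_pos (n+1)). pose proof (pow_lt 2 (2*n+1) ltac:(lra)).
  apply Rgt_not_eq. apply Rmult_lt_0_compat; [apply Rmult_lt_0_compat|]; lra.
Qed.
Lemma tl0_eq y n : tl0 y n = Cmult (RtoC (c0 n)) (cpow y (2 * n + 1)).
Proof.
  unfold tl0, c0. apply cdiv_eq.
  pose proof (gamma_half_pos (n+1)). pose proof (pow_lt 2 (2*n+1) ltac:(lra)).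
  apply Rgt_not_eq. apply Rmult_lt_0_compat; [apply Rmult_lt_0_compat|]; lra.
Qed.
Lemma tl1_eq y n : tl1 y n = Cmult (RtoC (c1 n)) (cpow y (2 * n + 2)).
Proof.
  unfold tl1, c1. apply cdiv_eq.
  pose proof (gamma_half_pos (n+1)). pose proof (gamma_half_pos (n+2)). pose proof (pow_lt 2 (2*n+2) ltac:(lra)).
  apply Rgt_not_eq. apply Rmult_lt_0_compat; [apply Rmult_lt_0_compat|]; lra.
Qed.
Lemma tb_eq y n : tb y n = Cmult (RtoC (a0 n / INR (2 * n + 1))) (cpow y (2 * n + 1)).
Proof.
  unfold tb, a0. rewrite cdiv_eq.
  - f_equal. f_equal. pose proof (fact_pos n). pose proof (pow_lt 4 n ltac:(lra)).
    assert (0 < INR (2*n+1)) by (apply lt_0_INR; lia).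
    field. split; [lra|]. split; [|lra]. apply pow_nonzero. lra.
  - pose proof (fact_pos n). pose proof (pow_lt 4 n ltac:(lra)).
    assert (0 < INR (2*n+1)) by (apply lt_0_INR; lia).
    apply Rgt_not_eq. apply Rmult_lt_0_compat; [apply Rmult_lt_0_compat; [lra|apply pow_lt; lra]|lra].
Qed.

Ltac conv_tac eqlem bnd :=
  match goal with |- ex_series (fun n => Cmod (?T n)) /\ ex_series ?T' =>
  eapply abs_conv; [ intros n; rewrite eqlem; apply bound_gen; apply bnd | apply maj_ex ] end.

Lemma ti0_conv y : ex_series (fun n => Cmod (ti0 y n)) /\ ex_series (ti0 y).
Proof. conv_tac ti0_eq a0_bound. Qed.
Lemma ti1_conv y : ex_series (fun n => Cmod (ti1 y n)) /\ ex_series (ti1 y).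
Proof. conv_tac ti1_eq a1_bound. Qed.
Lemma tl0_conv y : ex_series (fun n => Cmod (tl0 y n)) /\ ex_series (tl0 y).
Proof. conv_tac tl0_eq c0_bound. Qed.
Lemma tl1_conv y : ex_series (fun n => Cmod (tl1 y n)) /\ ex_series (tl1 y).
Proof. conv_tac tl1_eq c1_bound. Qed.
Lemma tb_conv y : ex_series (fun n => Cmod (tb y n)) /\ ex_series (tb y).
Proof. conv_tac tb_eq b_bound. Qed.

Lemma C_eq_pair (u v : C) : fst u = fst v -> snd u = snd v -> u = v.
Proof. destruct u, v; simpl; intros; subst; reflexivity. Qed.

Lemma part3 (y : C) :
  csum (tb y) =
  Cplus (Cmult y (I0 y))
    (Cmult (Cmult (RtoC (PI / 2)) y) (Cminus (Cmult (I0 y) (L1 y)) (Cmult (I1 y) (L0 y)))).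
Proof.
  change (I0 y) with (csum (ti0 y)). change (I1 y) with (csum (ti1 y)).
  change (L0 y) with (csum (tl0 y)). change (L1 y) with (csum (tl1 y)).
  destruct (ti0_conv y) as [A0 E0]. destruct (ti1_conv y) as [A1 E1].
  destruct (tl0_conv y) as [B0 F0]. destruct (tl1_conv y) as [B1 F1].
  destruct (tb_conv y) as [Ab Eb].
  pose proof (is_series_csum _ E0) as S0. pose proof (is_series_csum _ E1) as S1.
  pose proof (is_series_csum _ F0) as T0. pose proof (is_series_csum _ F1) as T1.
  pose proof (is_series_csum _ Eb) as Sb.
  pose proof (cauchy_C _ _ _ _ S0 T1 A0 B1) as P1.
  pose proof (cauchy_C _ _ _ _ S1 T0 A1 B0) as P2.
  pose proof (is_series_minus _ _ _ _ P1 P2) as P.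
  pose proof (@is_series_scal C_AbsRing C_NormedModule (Cmult (RtoC (PI / 2)) y) _ _ P) as Q.
  pose proof (@is_series_scal C_AbsRing C_NormedModule y _ _ S0) as Sy.
  pose proof (is_series_minus _ _ _ _ Sb Sy) as Sd.
  assert (Z : plus (tb y 0) (opp (scal y (ti0 y 0))) = zero).
  { rewrite tb_eq, ti0_eq. unfold a0. change (cpow y (2*0+1)) with (Cmult y (cpow y 0)).
    change (cpow y (2*0+0)) with (one : C). change (Cmult y one) with (Cmult y 1).
    change (INR (2*0+1)) with 1. change (4 ^ 0 * INR (fact 0) ^ 2) with (1 * 1 ^ 2).
    destruct y as [y1 y2]. apply C_eq_pair; simpl; field. }
  assert (Sd' : is_series (fun m => plus (tb y (S m)) (opp (scal y (ti0 y (S m)))))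
                  (plus (csum (tb y)) (opp (scal y (csum (ti0 y)))))).
  { apply (is_series_incr_1 (fun n => plus (tb y n) (opp (scal y (ti0 y n))))).
    rewrite Z, plus_zero_r. exact Sd. }
  clear Sd. rename Sd' into Sd.
  set (LHS := Cmult (Cmult (RtoC (PI / 2)) y) (Cminus (Cmult (csum (ti0 y)) (csum (tl1 y))) (Cmult (csum (ti1 y)) (csum (tl0 y))))).
  assert (HL : LHS = Cminus (csum (tb y)) (Cmult y (csum (ti0 y)))).
  { assert (E : forall m, 
       scal (Cmult (RtoC (PI / 2)) y)
         (plus (sum_n (fun k => Cmult (ti0 y k) (tl1 y (m - k)%nat)) m)
               (opp (sum_n (fun k => Cmult (ti1 y k) (tl0 y (m - k)%nat)) m)))
       = plus (tb y (S m)) (opp (scal y (ti0 y (S m))))).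
    { intros m.
      rewrite (sum_n_ext_loc _ (fun k => Cmult (RtoC (a0 k * c1 (m - k))) (cpow y (2 * m + 2)))).
      2:{ intros k Hk. rewrite ti0_eq, tl1_eq. rewrite RtoC_mult.
          replace (2 * m + 2)%nat with ((2 * k + 0) + (2 * (m - k) + 2))%nat by lia.
          rewrite (cpow_add y (2 * k + 0) (2 * (m - k) + 2)). match goal with |- ?a = ?b => change (@eq C a b) end. ring. }
      rewrite (sum_n_ext_loc (fun k => Cmult (ti1 y k) (tl0 y (m - k)%nat))
                 (fun k => Cmult (RtoC (a1 k * c0 (m - k))) (cpow y (2 * m + 2)))).
      2:{ intros k Hk. rewrite ti1_eq, tl0_eq. rewrite RtoC_mult.
          replace (2 * m + 2)%nat with ((2 * k + 1) + (2 * (m - k) + 1))%nat by lia.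
          rewrite (cpow_add y (2 * k + 1) (2 * (m - k) + 1)). match goal with |- ?a = ?b => change (@eq C a b) end. ring. }
      rewrite !sum_n_RtoC. rewrite tb_eq, ti0_eq.
      assert (Hc : sum_f_R0 (fun k => a0 k * c1 (m - k)) m - sum_f_R0 (fun k => a1 k * c0 (m - k)) m
                   = 2 / PI * (a0 (m+1) * (1 / (2 * INR m + 3) - 1))).
      { rewrite <- minus_sum. apply coef_id. }
      replace (2 * S m + 1)%nat with (S (2 * m + 2)) by lia.
      replace (2 * S m + 0)%nat with (S (2 * m + 2) - 1 + 0)%nat by lia.
      replace (S (2 * m + 2) - 1 + 0)%nat with (2 * m + 2)%nat by lia.
      change (cpow y (S (2 * m + 2))) with (Cmult y (cpow y (2 * m + 2))).
      replace (INR (S (2 * m + 2))) with (2 * INR m + 3) by (rewrite S_INR, plus_INR, mult_INR; simpl; ring).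
      replace (m + 1)%nat with (S m) in Hc by lia.
      set (z := cpow y (2 * m + 2)). clearbody z.
      set (s1 := sum_f_R0 (fun k => a0 k * c1 (m - k)) m) in *.
      set (s2 := sum_f_R0 (fun k => a1 k * c0 (m - k)) m) in *.
      set (u := a0 (S m)) in *. clearbody s1 s2 u.
      pose proof PI_RGT_0.
      destruct y as [y1 y2]. destruct z as [z1 z2].
      assert (Hs1 : s1 = s2 + 2 / PI * (u * (1 / (2 * INR m + 3) - 1))) by lra.
      rewrite Hs1. pose proof (pos_INR m).
      apply C_eq_pair; simpl; field; lra. }
    transitivity (csum (fun m => plus (tb y (S m)) (opp (scal y (ti0 y (S m)))))).
    - symmetry. apply csum_is. eapply is_series_ext; [exact E|]. exact Q.
    - exact (csum_is _ _ Sd). }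
  rewrite HL. ring.
Qed.

Lemma INR_fact_S' n : INR (fact (S n)) = (INR n + 1) * INR (fact n).
Proof. change (fact (S n)) with (S n * fact n)%nat. rewrite mult_INR, S_INR. reflexivity. Qed.
Lemma fact_pos' n : 0 < INR (fact n).
Proof. apply lt_0_INR. apply lt_O_fact. Qed.

Definition bin (n k : nat) : R :=
  if Nat.leb k n then INR (fact n) / (INR (fact k) * INR (fact (n - k))) else 0.

Lemma bin_out n k : (n < k)%nat -> bin n k = 0.
Proof. intros H. unfold bin. destruct (Nat.leb_spec k n); [lia|reflexivity]. Qed.

Lemma bin_in n k : (k <= n)%nat -> bin n k = INR (fact n) / (INR (fact k) * INR (fact (n - k))).
Proof. intros H. unfold bin. destruct (Nat.leb_spec k n); [reflexivity|lia]. Qed.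

Lemma bin_n0 n : bin n 0 = 1.
Proof. rewrite bin_in by lia. rewrite Nat.sub_0_r. simpl. pose proof (fact_pos' n). field. lra. Qed.

Lemma pascal n k : bin (S n) (S k) = bin n k + bin n (S k).
Proof.
  destruct (lt_eq_lt_dec k n) as [[Hlt|Heq]|Hgt].
  - rewrite !bin_in by lia.
    replace (S n - S k)%nat with (S (n - S k)) by lia.
    replace (n - k)%nat with (S (n - S k)) by lia.
    rewrite !INR_fact_S'.
    replace (INR (n - S k)) with (INR n - INR k - 1) by (rewrite minus_INR by lia; rewrite S_INR; ring).
    pose proof (fact_pos' n). pose proof (fact_pos' k). pose proof (fact_pos' (n - S k)).
    assert (INR k + 1 <= INR n) by (rewrite <- S_INR; apply le_INR; lia).
    pose proof (pos_INR k).
    field. repeat split; lra.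
  - subst k. rewrite (bin_out n (S n)) by lia. rewrite !bin_in by lia.
    rewrite !Nat.sub_diag. simpl (fact 0). simpl (INR 1).
    pose proof (fact_pos' n). pose proof (fact_pos' (S n)). field. lra.
  - rewrite !bin_out by lia. ring.
Qed.

Lemma bin_R1 n i : bin n i * (INR n + 1) = bin (S n) i * (INR n + 1 - INR i).
Proof.
  destruct (le_lt_dec i n) as [H|H].
  - rewrite !bin_in by lia. replace (S n - i)%nat with (S (n - i)) by lia.
    rewrite !INR_fact_S'. rewrite minus_INR by lia.
    pose proof (fact_pos' n). pose proof (fact_pos' i). pose proof (fact_pos' (n - i)).
    assert (INR i <= INR n) by (apply le_INR; lia).
    field. repeat split; lra.
  - rewrite (bin_out n i) by lia. destruct (Nat.eq_dec i (S n)) as [E|E].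
    + subst. rewrite S_INR. ring.
    + rewrite bin_out by lia. ring.
Qed.

Lemma bin_R2 n i : bin n (i + 2) * ((INR i + 1) * (INR i + 2)) =
   bin n i * ((INR n - INR i) * (INR n - INR i - 1)).
Proof.
  destruct (le_lt_dec (i + 2) n) as [H|H].
  - rewrite !bin_in by lia.
    replace (n - i)%nat with (S (S (n - (i + 2)))) by lia.
    replace (i + 2)%nat with (S (S i)) by lia.
    rewrite !INR_fact_S'. rewrite !S_INR.
    replace (INR (n - S (S i))) with (INR n - INR i - 2) by (rewrite minus_INR by lia; rewrite !S_INR; ring).
    pose proof (fact_pos' i). pose proof (fact_pos' n). pose proof (fact_pos' (n - S (S i))).
    pose proof (pos_INR i).
    assert (INR i + 2 <= INR n) by (replace 2 with (INR 2) by reflexivity; rewrite <- plus_INR; apply le_INR; lia).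
    field. repeat split; lra.
  - rewrite (bin_out n (i+2)) by lia.
    destruct (le_lt_dec i n) as [H2|H2].
    + assert (E : (i = n \/ i + 1 = n)%nat) by lia. destruct E as [E|E].
      * subst. ring.
      * replace (INR n) with (INR i + 1) by (rewrite <- E, plus_INR; reflexivity). ring.
    + rewrite bin_out by lia. ring.
Qed.

Definition g (j : nat) : R := INR (fact (2 * j)) / (4 ^ j * INR (fact j) ^ 2).

Lemma g_S j : g (S j) * (2 * (INR j + 1)) = g j * (2 * INR j + 1).
Proof.
  unfold g. replace (2 * S j)%nat with (S (S (2 * j))) by lia.
  rewrite !INR_fact_S', S_INR, mult_INR. simpl (INR 2). simpl pow.
  pose proof (fact_pos' j). pose proof (fact_pos' (2*j)). pose proof (pos_INR j).
  pose proof (pow_lt 4 j ltac:(lra)).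
  field. lra.
Qed.

Lemma g_pos j : 0 < g j.
Proof.
  unfold g. pose proof (fact_pos' j). pose proof (fact_pos' (2*j)). pose proof (pow_lt 4 j ltac:(lra)).
  apply Rdiv_lt_0_compat; [lra|]. apply Rmult_lt_0_compat; [lra|]. apply pow_lt; lra.
Qed.

Definition W k j := bin k (2 * j) * g j.
Definition U k := sum_f_R0 (fun j => W k j) k.
Definition Gc k j := - 4 * INR j ^ 2 * g j * bin (S k) (2 * j) / (INR k + 1).

Lemma wz_term k j : (INR k + 1) * W (S k) j - (2 * INR k + 1) * W k j = Gc k (S j) - Gc k j.
Proof.
  unfold W, Gc.
  pose proof (bin_R1 k (2 * j)) as R1.
  pose proof (bin_R2 (S k) (2 * j)) as R2.
  replace (2 * S j)%nat with (2 * j + 2)%nat by lia.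
  pose proof (g_S j) as GS.
  rewrite mult_INR in R1, R2. change (INR 2) with 2 in *. rewrite S_INR in R2. rewrite S_INR.
  pose proof (pos_INR k). pose proof (pos_INR j). pose proof (g_pos j).
  set (b := bin (S k) (2 * j)) in *. set (b2 := bin (S k) (2 * j + 2)) in *.
  set (b0 := bin k (2 * j)) in *.
  assert (Hb0 : b0 = b * (INR k + 1 - 2 * INR j) / (INR k + 1)).
  { apply (Rmult_eq_reg_r (INR k + 1)); [|lra]. rewrite R1. field. lra. }
  assert (Hb2 : b2 = b * ((INR k + 1 - 2 * INR j) * (INR k + 1 - 2 * INR j - 1)) / ((2 * INR j + 1) * (2 * INR j + 2))).
  { apply (Rmult_eq_reg_r ((2 * INR j + 1) * (2 * INR j + 2))); [|nra]. rewrite R2. field. lra. }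
  assert (Hg : g (S j) = g j * (2 * INR j + 1) / (2 * (INR j + 1))).
  { apply (Rmult_eq_reg_r (2 * (INR j + 1))); [|lra]. rewrite GS. field. lra. }
  rewrite Hb0, Hb2, Hg. field. lra.
Qed.

Lemma sum_tele (f : nat -> R) n : sum_f_R0 (fun j => f (S j) - f j) n = f (S n) - f 0%nat.
Proof. induction n as [|n IH]; simpl; [ring|]. rewrite IH. ring. Qed.

Lemma sum_ext_last (f : nat -> R) n : f (S n) = 0 -> sum_f_R0 f (S n) = sum_f_R0 f n.
Proof. intros H. simpl. rewrite H. ring. Qed.

Lemma U_rec k : (INR k + 1) * U (S k) = (2 * INR k + 1) * U k.
Proof.
  unfold U.
  rewrite <- (sum_ext_last (fun j => W k j) k).
  2:{ unfold W. rewrite bin_out by lia. ring. }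
  apply Rminus_diag_uniq.
  rewrite !scal_sum. rewrite <- minus_sum.
  rewrite (sum_eq _ (fun j => Gc k (S j) - Gc k j)).
  2:{ intros j _. rewrite <- wz_term. ring. }
  rewrite sum_tele. unfold Gc. rewrite (bin_out (S k) (2 * S (S k))) by lia.
  simpl (INR 0). field. pose proof (pos_INR k). lra.
Qed.

Definition alpha (n : nat) : R := Binomial.C (2 * n) n / 2 ^ n.

Lemma alpha_closed n : alpha n = INR (fact (2 * n)) / (INR (fact n) * INR (fact n) * 2 ^ n).
Proof.
  unfold alpha, Binomial.C. replace (2 * n - n)%nat with n by lia.
  pose proof (fact_pos' n). pose proof (fact_pos' (2*n)). pose proof (pow_lt 2 n ltac:(lra)).
  field. lra.
Qed.

Lemma alpha_S n : (INR n + 1) * alpha (S n) = (2 * INR n + 1) * alpha n.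
Proof.
  rewrite !alpha_closed. replace (2 * S n)%nat with (S (S (2 * n))) by lia.
  rewrite !INR_fact_S', S_INR, mult_INR. change (INR 2) with 2. simpl pow.
  pose proof (fact_pos' n). pose proof (fact_pos' (2*n)). pose proof (pow_lt 2 n ltac:(lra)).
  pose proof (pos_INR n).
  field. lra.
Qed.

Lemma alpha_0 : alpha 0 = 1.
Proof. rewrite alpha_closed. simpl. field. Qed.

Lemma U_0 : U 0 = 1.
Proof. unfold U, W. simpl. rewrite bin_n0. unfold g. simpl. field. Qed.

Lemma U_alpha k : U k = alpha k.
Proof.
  induction k as [|k IH].
  - rewrite U_0, alpha_0. reflexivity.
  - pose proof (U_rec k) as H. rewrite IH, <- alpha_S in H.
    pose proof (pos_INR k). apply (Rmult_eq_reg_l (INR k + 1)); [exact H|lra].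
Qed.

Lemma alpha_pos n : 0 < alpha n.
Proof.
  rewrite alpha_closed. pose proof (fact_pos' n). pose proof (fact_pos' (2*n)). pose proof (pow_lt 2 n ltac:(lra)).
  apply Rdiv_lt_0_compat; [lra|]. apply Rmult_lt_0_compat; [nra|lra].
Qed.

Lemma alpha_le n : alpha n <= 2 ^ n.
Proof.
  induction n as [|n IH].
  - rewrite alpha_0. simpl. lra.
  - pose proof (alpha_S n) as H. pose proof (alpha_pos n). pose proof (pos_INR n).
    simpl pow.
    assert (E : alpha (S n) = (2 * INR n + 1) / (INR n + 1) * alpha n).
    { apply (Rmult_eq_reg_l (INR n + 1)); [|lra]. rewrite H. field. lra. }
    rewrite E. 
    assert ((2 * INR n + 1) / (INR n + 1) <= 2).
    { apply (Rmult_le_reg_r (INR n + 1)); [lra|]. unfold Rdiv. rewrite Rmult_assoc, Rinv_l by lra. lra. }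
    assert (0 <= (2 * INR n + 1) / (INR n + 1)) by (apply Rdiv_le_0_compat; lra).
    apply Rle_trans with (2 * alpha n); [apply Rmult_le_compat_r; lra|lra].
Qed.

Fixpoint Asum (k : nat) : R := match k with O => 0 | S k => Asum k + alpha k end.

Lemma Asum_nonneg k : 0 <= Asum k.
Proof. induction k; simpl; [lra|]. pose proof (alpha_pos k). lra. Qed.

Lemma Asum_le k : Asum k <= 2 ^ k.
Proof.
  induction k as [|k IH]; simpl; [lra|]. pose proof (alpha_le k). lra.
Qed.

Definition B k := sum_f_R0 (fun j => bin k (2 * j + 1) * g j) k.

Lemma B_S k : B (S k) = B k + U k.
Proof.
  unfold B, U.
  rewrite (sum_eq (fun j => bin (S k) (2 * j + 1) * g j) (fun j => W k j + bin k (2 * j + 1) * g j)).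
  2:{ intros j _. unfold W. replace (2 * j + 1)%nat with (S (2 * j)) by lia. rewrite pascal.
      replace (S (2 * j)) with (2 * j + 1)%nat by lia. ring. }
  rewrite plus_sum. rewrite (sum_ext_last (fun j => W k j)).
  2:{ unfold W. rewrite bin_out by lia. ring. }
  rewrite (sum_ext_last (fun j => bin k (2 * j + 1) * g j)).
  2:{ rewrite bin_out by lia. ring. }
  ring.
Qed.

Lemma B_Asum k : B k = Asum k.
Proof.
  induction k as [|k IH].
  - unfold B. simpl. rewrite bin_out by lia. ring.
  - rewrite B_S, IH, U_alpha. reflexivity.
Qed.

Lemma sum_zero_beyond (d : nat -> R) k m : (k <= m)%nat -> (forall i, (k < i)%nat -> d i = 0) ->
  sum_f_R0 d m = sum_f_R0 d k.
Proof.
  intros Hkm Hz. induction m as [|m IH].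
  - replace k with 0%nat by lia. reflexivity.
  - destruct (Nat.eq_dec k (S m)) as [E|E]; [subst; reflexivity|].
    simpl. rewrite IH by lia. rewrite Hz by lia. ring.
Qed.

Lemma sum_odd (d : nat -> R) n : (forall j, d (2 * j)%nat = 0) ->
  sum_f_R0 d (2 * n + 1) = sum_f_R0 (fun j => d (2 * j + 1)%nat) n.
Proof.
  intros Hz. induction n as [|n IH].
  - pose proof (Hz 0%nat) as H0. simpl in H0. simpl. rewrite H0. ring.
  - replace (2 * S n + 1)%nat with (S (S (2 * n + 1))) by lia.
    rewrite tech5, tech5, IH, (tech5 (fun j => d (2*j+1)%nat) n).
    replace (S (2 * n + 1)) with (2 * S n)%nat by lia. rewrite Hz.
    replace (S (2 * S n)) with (2 * S n + 1)%nat by lia. ring.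
Qed.

Definition betar (i : nat) : R := if Nat.even i then 0 else g (Nat.div2 i) / INR (fact i).

Lemma even_double j : Nat.even (2 * j) = true.
Proof. induction j as [|j IH]; [reflexivity|]. replace (2 * S j)%nat with (S (S (2 * j))) by lia. exact IH. Qed.
Lemma even_double1 j : Nat.even (2 * j + 1) = false.
Proof. induction j as [|j IH]; [reflexivity|]. replace (2 * S j + 1)%nat with (S (S (2 * j + 1))) by lia. exact IH. Qed.

Lemma coef_exp k : sum_f_R0 (fun i => betar i / INR (fact (k - i))) k = Asum k / INR (fact k).
Proof.
  rewrite <- B_Asum. pose proof (fact_pos' k).
  rewrite (sum_eq _ (fun i => (betar i * INR (fact i) * bin k i) / INR (fact k))).
  2:{ intros i Hi. rewrite bin_in by lia. pose proof (fact_pos' i). pose proof (fact_pos' (k - i)).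
      field. lra. }
  rewrite <- (Rmult_1_r (sum_f_R0 _ _)).
  assert (E : forall f : nat -> R, sum_f_R0 (fun i => f i / INR (fact k)) k = sum_f_R0 f k / INR (fact k)).
  { intros f. unfold Rdiv. rewrite <- scal_sum. ring. }
  rewrite Rmult_1_r, E. f_equal.
  rewrite <- (sum_zero_beyond (fun i => betar i * INR (fact i) * bin k i) k (2 * k + 1)) by
    (try lia; intros i Hi; rewrite bin_out by lia; ring).
  rewrite sum_odd.
  2:{ intros j. unfold betar. rewrite even_double. ring. }
  unfold B. apply sum_eq. intros j _. unfold betar. rewrite even_double1.
  replace (Nat.div2 (2 * j + 1)) with j by (rewrite Nat.div2_odd'; reflexivity).
  pose proof (fact_pos' (2 * j + 1)). field. lra.
Qed.

Lemma interleave_R (c d : nat -> R) (l : R) :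
  (forall j, d (2 * j)%nat = 0) -> (forall j, d (2 * j + 1)%nat = c j) ->
  is_series c l -> is_series d l.
Proof.
  intros Hz Ho Hc.
  assert (E : forall n, sum_n d (S n) = sum_n c (Nat.div2 n)).
  { intros n. rewrite !sum_n_Reals.
    destruct (Nat.Even_or_Odd n) as [[j Hj]|[j Hj]]; subst n.
    - rewrite Nat.div2_double. replace (S (2 * j)) with (2 * j + 1)%nat by lia.
      rewrite sum_odd by exact Hz. apply sum_eq. intros; apply Ho.
    - replace (2 * j + 1)%nat with (S (2 * j)) by lia. rewrite Nat.div2_succ_double.
      rewrite tech5. replace (S (S (2 * j))) with (2 * S j)%nat by lia. rewrite Hz, Rplus_0_r.
      replace (S (2 * j)) with (2 * j + 1)%nat by lia.
      rewrite sum_odd by exact Hz. apply sum_eq. intros; apply Ho. }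
  assert (Hphi : filterlim (fun n => Nat.div2 (Nat.pred n)) eventually eventually).
  { intros P [N HN]. exists (2 * N + 1)%nat. intros n Hn. apply HN.
    apply Nat.div2_le_lower_bound. lia. }
  pose proof (is_lim_seq_subseq (sum_n c) l _ Hphi Hc) as H.
  change (is_lim_seq (sum_n d) l).
  eapply is_lim_seq_ext_loc; [|exact H].
  exists 1%nat. intros n Hn. destruct n as [|n]; [lia|]. simpl Nat.pred. symmetry. apply E.
Qed.

Lemma interleave_C (c d : nat -> C) (l : C) :
  (forall j, d (2 * j)%nat = RtoC 0) -> (forall j, d (2 * j + 1)%nat = c j) ->
  is_series c l -> is_series d l.
Proof.
  intros Hz Ho Hc. apply is_series_C in Hc. destruct Hc as [H1 H2]. apply is_series_C. split.
  - apply (interleave_R (fun n => fst (c n))); [intros j; rewrite Hz; reflexivity|intros j; rewrite Ho; reflexivity|exact H1].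
  - apply (interleave_R (fun n => snd (c n))); [intros j; rewrite Hz; reflexivity|intros j; rewrite Ho; reflexivity|exact H2].
Qed.

Lemma interleave_abs (c d : nat -> C) :
  (forall j, d (2 * j)%nat = RtoC 0) -> (forall j, d (2 * j + 1)%nat = c j) ->
  ex_series (fun n => Cmod (c n)) -> ex_series (fun n => Cmod (d n)).
Proof.
  intros Hz Ho [l Hl]. exists l. apply (interleave_R (fun n => Cmod (c n))); [|intros j; rewrite Ho; reflexivity|exact Hl].
  intros j. rewrite Hz. apply Cmod_0.
Qed.

Definition tt (y : C) k := Cdiv (cpow y k) (RtoC (INR (fact k))).
Definition bp (y : C) i := Cmult (RtoC (betar i)) (cpow y i).

Lemma tt_eq y k : tt y k = Cmult (RtoC (/ INR (fact k))) (cpow y k).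
Proof. unfold tt. apply cdiv_eq. pose proof (fact_pos k). lra. Qed.

Lemma tt_conv y : ex_series (fun n => Cmod (tt y n)) /\ ex_series (tt y).
Proof.
  apply (abs_conv _ (fun n => 1 * (Cmod y ^ n / INR (fact n)))); [|apply maj_ex].
  intros n. rewrite tt_eq, Cmod_term. pose proof (fact_pos n).
  rewrite Rabs_pos_eq by (left; apply Rinv_0_lt_compat; lra). unfold Rdiv. lra.
Qed.

Lemma bp_even y j : bp y (2 * j) = RtoC 0.
Proof.
  unfold bp, betar. rewrite even_double. destruct (cpow y (2 * j)) as [z1 z2].
  apply C_eq_pair; simpl; ring.
Qed.

Lemma bp_odd y j : bp y (2 * j + 1) = tb y j.
Proof.
  unfold bp, betar. rewrite even_double1, tb_eq.
  replace (Nat.div2 (2 * j + 1)) with j by (rewrite Nat.div2_odd'; reflexivity).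
  f_equal. f_equal. unfold g, a0. replace (2 * j + 1)%nat with (S (2 * j)) by lia.
  rewrite INR_fact_S. rewrite S_INR.
  pose proof (fact_pos j). pose proof (fact_pos (2*j)). pose proof (pos_INR (2*j)).
  pose proof (pow_lt 4 j ltac:(lra)).
  field. repeat split; try lra; try (apply pow_nonzero; lra).
Qed.

Lemma bp_conv y : ex_series (fun n => Cmod (bp y n)) /\ is_series (bp y) (csum (tb y)).
Proof.
  destruct (tb_conv y) as [A E]. split.
  - apply (interleave_abs (tb y)); [apply bp_even|apply bp_odd|exact A].
  - apply (interleave_C (tb y)); [apply bp_even|apply bp_odd|apply is_series_csum; exact E].
Qed.

Lemma cauchy_term y k :
  sum_n (fun i => Cmult (bp y i) (tt y (k - i)%nat)) k = Cmult (RtoC (Asum k)) (tt y k).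
Proof.
  rewrite (sum_n_ext_loc _ (fun i => Cmult (RtoC (betar i / INR (fact (k - i)))) (cpow y k))).
  2:{ intros i Hi. unfold bp. rewrite tt_eq. unfold Rdiv. rewrite RtoC_mult.
      replace (cpow y k) with (Cmult (cpow y i) (cpow y (k - i))) by (rewrite <- cpow_add; f_equal; lia).
      match goal with |- ?a = ?b => change (@eq C a b) end. ring. }
  rewrite sum_n_RtoC, coef_exp, tt_eq. unfold Rdiv. rewrite RtoC_mult.
  match goal with |- ?a = ?b => change (@eq C a b) end. ring.
Qed.

Lemma Y_series y :
  is_series (fun k => Cmult (RtoC (Asum k)) (tt y k)) (Cmult (cexp y) (csum (tb y))).
Proof.
  destruct (bp_conv y) as [Ab Sb]. destruct (tt_conv y) as [At Et].
  pose proof (is_series_csum _ Et) as St.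
  pose proof (cauchy_C _ _ _ _ Sb St Ab At) as P.
  eapply is_series_ext; [intros k; apply cauchy_term|].
  replace (Cmult (cexp y) (csum (tb y))) with (Cmult (csum (tb y)) (csum (tt y))).
  - exact P.
  - change (cexp y) with (csum (tt y)). ring.
Qed.

Lemma Cmod_le_sum (z : C) : Cmod z <= Rabs (fst z) + Rabs (snd z).
Proof.
  destruct z as [x w]. unfold Cmod. simpl.
  rewrite <- (sqrt_Rsqr (Rabs x + Rabs w)) by (pose proof (Rabs_pos x); pose proof (Rabs_pos w); lra).
  apply sqrt_le_1_alt. unfold Rsqr.
  pose proof (Rabs_pos x). pose proof (Rabs_pos w).
  assert (x * x = Rabs x * Rabs x) by (rewrite <- Rabs_mult; rewrite Rabs_pos_eq; [ring|nra]).
  assert (w * w = Rabs w * Rabs w) by (rewrite <- Rabs_mult; rewrite Rabs_pos_eq; [ring|nra]).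
  simpl. nra.
Qed.

Lemma abel y N :
  sum_n (fun n => Cmult (RtoC (alpha n)) (Rrem n y)) N =
  Cplus (Cmult (RtoC (Asum (S N))) (Rrem N y)) (sum_n (fun k => Cmult (RtoC (Asum k)) (tt y k)) N).
Proof.
  induction N as [|N IH].
  - rewrite !sum_O. simpl Asum. rewrite Rplus_0_l.
    match goal with |- ?a = ?b => change (@eq C a b) end.
    replace (RtoC 0) with (Cmult (RtoC 0) (RtoC 0)) by (rewrite <- RtoC_mult; f_equal; ring).
    destruct (Rrem 0 y) as [r1 r2]. destruct (tt y 0) as [t1 t2]. apply C_eq_pair; simpl; ring.
  - rewrite sum_Sn, IH, sum_Sn. unfold Rrem. rewrite sum_Sn.
    change (sum_n (fun k => Cdiv (cpow y k) (RtoC (INR (fact k))))) with (sum_n (tt y)).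
    change (Cdiv (cpow y (S N)) (RtoC (INR (fact (S N))))) with (tt y (S N)).
    simpl Asum. rewrite !RtoC_plus.
    match goal with |- ?a = ?b => change (@eq C a b) end.
    repeat change (plus ?a ?b) with (Cplus a b). ring.
Qed.

Lemma exp_lim (t : R) : is_lim_seq (fun N => sum_f_R0 (fun k => t ^ k / INR (fact k)) N)
   (Series (fun k => t ^ k / INR (fact k))).
Proof.
  pose proof (Series_correct _ (exp_ex t)) as H.
  eapply is_lim_seq_ext; [|exact H]. intros n. apply sum_n_Reals.
Qed.

Lemma tail_lim (t : R) : is_lim_seq (fun N => Series (fun j => t ^ (S N + j) / INR (fact (S N + j)))) 0.
Proof.
  set (h := fun k => t ^ k / INR (fact k)).
  assert (E : forall N, Series (fun j => h (S N + j)%nat) = Series h - sum_f_R0 h N).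
  { intros N. rewrite (Series_incr_n h (S N)) by (lia || apply exp_ex). simpl Nat.pred. ring. }
  eapply is_lim_seq_ext; [intros N; symmetry; apply E|].
  replace (Finite 0) with (Rbar_minus (Series h) (Series h)) by (simpl; f_equal; ring).
  apply is_lim_seq_minus'; [apply is_lim_seq_const|apply exp_lim].
Qed.

Lemma Cminus_plus_cancel (a b : C) : a = Cplus (Cminus a b) b.
Proof. ring. Qed.

Lemma rem_bound y N :
  Cmod (Rrem N y) <= 2 * Series (fun j => Cmod y ^ (S N + j) / INR (fact (S N + j))).
Proof.
  destruct (tt_conv y) as [At Et]. pose proof (is_series_csum _ Et) as St.
  set (tl := fun j => tt y (S N + j)%nat).
  assert (Htl : is_series tl (Rrem N y)).
  { unfold tl. apply is_series_incr_n; [lia|]. simpl Nat.pred. unfold Rrem.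
    change (cexp y) with (csum (tt y)).
    change (sum_n (fun k => Cdiv (cpow y k) (RtoC (INR (fact k))))) with (sum_n (tt y)).
    match goal with |- is_series _ ?L => replace L with (csum (tt y)) end.
    - exact St.
    - apply Cminus_plus_cancel. }
  assert (Atl : ex_series (fun j => Cmod (tl j))).
  { unfold tl. apply (ex_series_incr_n (fun k => Cmod (tt y k)) (S N)). exact At. }
  assert (Ctl : forall j, Cmod (tl j) = Cmod y ^ (S N + j) / INR (fact (S N + j))).
  { intros j. unfold tl. rewrite tt_eq, Cmod_term. pose proof (fact_pos (S N + j)).
    rewrite Rabs_pos_eq by (left; apply Rinv_0_lt_compat; lra). unfold Rdiv. ring. }
  rewrite <- (Series_ext _ _ Ctl).
  rewrite <- (csum_is _ _ Htl).
  eapply Rle_trans; [apply Cmod_le_sum|].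
  unfold csum. cbn [fst snd]. unfold Re, Im.
  pose proof (abs_fst _ Atl) as A1. pose proof (abs_snd _ Atl) as A2.
  assert (B1 : Series (fun n => Rabs (fst (tl n))) <= Series (fun j => Cmod (tl j))).
  { apply Series_le; [|exact Atl]. intros n. split; [apply Rabs_pos|apply fst_le_Cmod]. }
  assert (B2 : Series (fun n => Rabs (snd (tl n))) <= Series (fun j => Cmod (tl j))).
  { apply Series_le; [|exact Atl]. intros n. split; [apply Rabs_pos|apply im_le_Cmod]. }
  pose proof (Series_Rabs _ A1). pose proof (Series_Rabs _ A2). lra.
Qed.

Lemma X_bound y N :
  Cmod (Cmult (RtoC (Asum (S N))) (Rrem N y)) <=
  2 * Series (fun j => (2 * Cmod y) ^ (S N + j) / INR (fact (S N + j))).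
Proof.
  rewrite Cmod_mult, Cmod_R, Rabs_pos_eq by apply Asum_nonneg.
  pose proof (rem_bound y N) as HR. pose proof (Asum_le (S N)) as HA.
  pose proof (Asum_nonneg (S N)). pose proof (Cmod_ge_0 (Rrem N y)).
  set (T := Series (fun j => Cmod y ^ (S N + j) / INR (fact (S N + j)))) in *.
  assert (HT2 : 2 ^ S N * T <= Series (fun j => (2 * Cmod y) ^ (S N + j) / INR (fact (S N + j)))).
  { unfold T. rewrite <- Series_scal_l. apply Series_le.
    - intros j. pose proof (fact_pos (S N + j)). pose proof (Cmod_ge_0 y) as Hy.
      pose proof (pow_le (Cmod y) (S N + j) Hy). pose proof (pow_lt 2 (S N) ltac:(lra)).
      split.
      + apply Rmult_le_pos; [lra|]. apply Rdiv_le_0_compat; lra.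
      + rewrite Rpow_mult_distr. unfold Rdiv.
        assert (1 <= 2 ^ j) by (apply pow_R1_Rle; lra).
        assert (0 <= Cmod y ^ (S N + j) * / INR (fact (S N + j))).
        { apply Rmult_le_pos; [lra|]. left; apply Rinv_0_lt_compat; lra. }
        assert (2 ^ S N <= 2 ^ (S N + j)) by (rewrite pow_add; nra).
        rewrite (Rmult_assoc (2 ^ (S N + j))). apply Rmult_le_compat_r; lra.
    - apply (ex_series_incr_n (fun k => (2 * Cmod y) ^ k / INR (fact k)) (S N)). apply exp_ex. }
  assert (0 <= T).
  { pose proof (Cmod_ge_0 (Rrem N y)). lra. }
  apply Rle_trans with (2 ^ S N * (2 * T)).
  - apply Rmult_le_compat; lra.
  - lra.
Qed.

Lemma X_lim y :
  is_lim_seq (fun N => fst (Cmult (RtoC (Asum (S N))) (Rrem N y))) 0 /\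
  is_lim_seq (fun N => snd (Cmult (RtoC (Asum (S N))) (Rrem N y))) 0.
Proof.
  pose proof (tail_lim (2 * Cmod y)) as HT.
  set (T2 := fun N => Series (fun j => (2 * Cmod y) ^ (S N + j) / INR (fact (S N + j)))) in *.
  assert (Hu : is_lim_seq (fun N => - (2 * T2 N)) 0).
  { replace (Finite 0) with (Rbar_opp (Rbar_mult 2 0)) by (simpl; f_equal; ring).
    apply -> is_lim_seq_opp. apply is_lim_seq_scal_l. exact HT. }
  assert (Hw : is_lim_seq (fun N => 2 * T2 N) 0).
  { replace (Finite 0) with (Rbar_mult 2 0) by (simpl; f_equal; ring).
    apply is_lim_seq_scal_l. exact HT. }
  split.
  - apply (is_lim_seq_le_le _ _ _ 0 (fun N => conj _ _) Hu Hw) ||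
    (apply (is_lim_seq_le_le (fun N => - (2 * T2 N)) _ (fun N => 2 * T2 N)); [|exact Hu|exact Hw];
     intros N; pose proof (X_bound y N) as B; pose proof (fst_le_Cmod (Cmult (RtoC (Asum (S N))) (Rrem N y)));
     unfold T2; apply Rabs_le_between; lra).
  - apply (is_lim_seq_le_le (fun N => - (2 * T2 N)) _ (fun N => 2 * T2 N)); [|exact Hu|exact Hw].
    intros N. pose proof (X_bound y N) as B. pose proof (im_le_Cmod (Cmult (RtoC (Asum (S N))) (Rrem N y))).
    unfold T2. apply Rabs_le_between. lra.
Qed.

Lemma part2 y :
  is_series (fun n => Cmult (RtoC (Binomial.C (2 * n) n / 2 ^ n)) (Rrem n y))
    (Cmult (cexp y) (csum (tb y))).
Proof.
  pose proof (Y_series y) as HY. apply is_series_C in HY. destruct HY as [Y1 Y2].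
  destruct (X_lim y) as [X1 X2].
  assert (E : forall (a : nat -> R) m, is_series a m <-> is_lim_seq (sum_n a) m).
  { intros a m. split; intros H; exact H. }
  apply is_series_C. rewrite !E. rewrite E in Y1, Y2. split.
  - replace (fst (Cmult (cexp y) (csum (tb y)))) with (0 + fst (Cmult (cexp y) (csum (tb y)))) by ring.
    eapply is_lim_seq_ext; [|apply (is_lim_seq_plus' _ _ _ _ X1 Y1)].
    intros N. cbv beta. rewrite <- sum_n_fst, <- sum_n_fst.
    change (fun n => Cmult (RtoC (Binomial.C (2 * n) n / 2 ^ n)) (Rrem n y))
      with (fun n => Cmult (RtoC (alpha n)) (Rrem n y)).
    rewrite abel. reflexivity.
  - replace (snd (Cmult (cexp y) (csum (tb y)))) with (0 + snd (Cmult (cexp y) (csum (tb y)))) by ring.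
    eapply is_lim_seq_ext; [|apply (is_lim_seq_plus' _ _ _ _ X2 Y2)].
    intros N. cbv beta. rewrite <- sum_n_snd, <- sum_n_snd.
    change (fun n => Cmult (RtoC (Binomial.C (2 * n) n / 2 ^ n)) (Rrem n y))
      with (fun n => Cmult (RtoC (alpha n)) (Rrem n y)).
    rewrite abel. reflexivity.
Qed.

Theorem mainTheorem14 (y : C) :
  let b := fun n : nat =>
    Cdiv (cpow y (2 * n + 1))
         (RtoC (4 ^ n * (INR (Factorial.fact n)) ^ 2 * INR (2 * n + 1))) in
  ex_series b /\
  is_series (fun n : nat =>
      Cmult (RtoC (Binomial.C (2 * n) n / 2 ^ n)) (Rrem n y))
    (Cmult (cexp y) (csum b)) /\
  Cmult (cexp y) (csum b) =
  Cmult (cexp y)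
    (Cplus (Cmult y (I0 y))
           (Cmult (Cmult (RtoC (PI / 2)) y)
                  (Cminus (Cmult (I0 y) (L1 y)) (Cmult (I1 y) (L0 y))))).
Proof.
  intros b. change b with (tb y). split; [|split].
  - exact (proj2 (tb_conv y)).
  - apply part2.
  - rewrite part3. reflexivity.
Qed.
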